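(* Let $q(x,y)=ax^2+bxy+cy^2$ with $a,b,c\in\mathbb{Z}$ be a positive definite binary quadratic form (so $\Delta(q)=b^2-4ac<0$ and $a>0$), and let $k\in\mathbb{Z}$. Then the equation $q(x,y)=k$ has at most $4$ solutions $(x,y)\in\mathbb{Z}^2$ satisfying $$|x|\le\frac{|k|^{1/4}}{\sqrt{-\Delta(q)}}.$$ *)

(* Defs.v *)
From Stdlib Require Import Reals ZArith List.
Open Scope Z_scope.

Definition qf (a b c x y : Z) : Z := a * x ^ 2 + b * x * y + c * y ^ 2.

Definition qdisc (a b c : Z) : Z := b ^ 2 - 4 * a * c.

(* Main.v *)
Require Import Defs.
From Stdlib Require Import Reals ZArith List Lia Lra Psatz.
Open Scope Z_scope.
Lemma real_bound (x D K : Z) : 0 < D -> 0 <= K ->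
  (Rabs (IZR x) <= sqrt (sqrt (IZR K)) / sqrt (IZR D))%R -> D^2 * x^4 <= K.
Proof.
  intros hD hK h.
  assert (hDr : (0 < IZR D)%R) by (apply IZR_lt; lia).
  assert (hKr : (0 <= IZR K)%R) by (apply IZR_le; lia).
  assert (hs : (0 < sqrt (IZR D))%R) by (apply sqrt_lt_R0; lra).
  set (r := Rabs (IZR x)) in *. set (S := sqrt (sqrt (IZR K))) in *.
  assert (hr : (0 <= r)%R) by apply Rabs_pos.
  assert (h1 : (r * sqrt (IZR D) <= S)%R).
  { assert (H : (r * sqrt (IZR D) <= S / sqrt (IZR D) * sqrt (IZR D))%R)
      by (apply Rmult_le_compat_r; lra).
    replace (S / sqrt (IZR D) * sqrt (IZR D))%R with S in H by (field; lra). exact H. }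
  assert (h2 : ((r * sqrt (IZR D))^2 <= S^2)%R).
  { apply pow_incr; split; [apply Rmult_le_pos; lra | exact h1]. }
  rewrite Rpow_mult_distr, pow2_sqrt in h2 by lra.
  unfold S in h2. rewrite pow2_sqrt in h2 by (apply sqrt_pos).
  assert (h3 : ((r^2 * IZR D)^2 <= (sqrt (IZR K))^2)%R).
  { apply pow_incr; split; [apply Rmult_le_pos; [apply pow2_ge_0|lra] | exact h2]. }
  rewrite pow2_sqrt in h3 by lra.
  unfold r in h3. rewrite pow2_abs in h3.
  apply le_IZR. rewrite mult_IZR.
  change (D^2) with (D ^ Z.of_nat 2). change (x^4) with (x ^ Z.of_nat 4).
  rewrite <- !pow_IZR.
  replace ((IZR x ^ 2 * IZR D) ^ 2)%R with (IZR D ^ 2 * IZR x ^ 4)%R in h3 by ring.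
  exact h3.
Qed.
Definition tt (b c : Z) (p : Z*Z) : Z := 2*c*snd p + b*fst p.

Lemma t_sq (a b c x y : Z) :
  (2*c*y + b*x)^2 = 4*c*qf a b c x y - (4*a*c - b^2) * x^2.
Proof. unfold qf. ring. Qed.

Lemma t_big (a b c k x y : Z) : 0 < c -> 1 <= k -> 0 < 4*a*c - b^2 ->
  qf a b c x y = k -> (4*a*c-b^2)^2 * x^4 <= k ->
  (4*a*c-b^2) * x^2 < Z.abs (2*c*y + b*x).
Proof.
  intros hc hk hD hq hb.
  pose proof (t_sq a b c x y) as e. rewrite hq in e.
  set (t := 2*c*y+b*x) in *. set (D := 4*a*c-b^2) in *.
  set (s := D * x^2).
  assert (hs0 : 0 <= s) by (unfold s; apply Z.mul_nonneg_nonneg; [lia|rewrite Z.pow_2_r; apply Z.square_nonneg]).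
  assert (hs2 : s^2 <= k) by (replace (s^2) with (D^2*x^4) by (unfold s; ring); exact hb).
  assert (hsk : s <= k).
  { destruct (Z.eq_dec s 0) as [->|]; [lia|].
    assert (s * 1 <= s * s) by (apply Z.mul_le_mono_nonneg_l; lia).
    rewrite <- Z.pow_2_r in *. lia. }
  assert (hck : 1 * k <= c * k) by (apply Z.mul_le_mono_nonneg_r; lia).
  assert (ht : t^2 >= 3*k) by (fold s in e; lia).
  destruct (Z.eq_dec s 0) as [->|hne].
  - assert (t <> 0) by (intro h0; rewrite h0 in ht; lia). lia.
  - assert (s^2 < t^2) by lia.
    assert (ha : Z.abs t * Z.abs t = t^2) by (destruct (Z.abs_spec t) as [[_ ->]|[_ ->]]; ring).
    assert (0 <= Z.abs t) by apply Z.abs_nonneg.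
    destruct (Z.lt_ge_cases s (Z.abs t)) as [|hh]; [assumption|].
    assert (Z.abs t * Z.abs t <= s * s) by (apply Z.mul_le_mono_nonneg; lia).
    lia.
Qed.

Lemma abs_eq_aux (u1 u2 s1 s2 : Z) : 0 <= s1 -> 0 <= s2 -> s1 < u1 -> s2 < u2 ->
  u1*u1 + s1 = u2*u2 + s2 -> u1 = u2.
Proof.
  intros h1 h2 g1 g2 e.
  destruct (Z.lt_total u1 u2) as [hl|[he|hl]]; [|exact he|].
  - assert ((u2-u1)*(u2+u1) >= 1*(u2+u1)) by (apply Z.le_ge, Z.mul_le_mono_nonneg_r; lia).
    assert ((u2-u1)*(u2+u1) = u2*u2 - u1*u1) by ring. lia.
  - assert ((u1-u2)*(u2+u1) >= 1*(u2+u1)) by (apply Z.le_ge, Z.mul_le_mono_nonneg_r; lia).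
    assert ((u1-u2)*(u2+u1) = u1*u1 - u2*u2) by ring. lia.
Qed.
Lemma abs_sq (t : Z) : Z.abs t * Z.abs t = t^2.
Proof. destruct (Z.abs_spec t) as [[_ ->]|[_ ->]]; ring. Qed.

Lemma same_t (a b c k x1 y1 x2 y2 : Z) : 0 < c -> 1 <= k -> 0 < 4*a*c - b^2 ->
  qf a b c x1 y1 = k -> (4*a*c-b^2)^2 * x1^4 <= k ->
  qf a b c x2 y2 = k -> (4*a*c-b^2)^2 * x2^4 <= k ->
  0 < (2*c*y1+b*x1) * (2*c*y2+b*x2) ->
  2*c*y1+b*x1 = 2*c*y2+b*x2.
Proof.
  intros hc hk hD h1 b1 h2 b2 hsg.
  pose proof (t_big a b c k x1 y1 hc hk hD h1 b1) as g1.
  pose proof (t_big a b c k x2 y2 hc hk hD h2 b2) as g2.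
  pose proof (t_sq a b c x1 y1) as e1. rewrite h1 in e1.
  pose proof (t_sq a b c x2 y2) as e2. rewrite h2 in e2.
  rewrite <- abs_sq in e1, e2.
  set (t1 := 2*c*y1+b*x1) in *. set (t2 := 2*c*y2+b*x2) in *.
  set (D := 4*a*c-b^2) in *.
  assert (0 <= D * x1^2) by (apply Z.mul_nonneg_nonneg; [lia|rewrite Z.pow_2_r; apply Z.square_nonneg]).
  assert (0 <= D * x2^2) by (apply Z.mul_nonneg_nonneg; [lia|rewrite Z.pow_2_r; apply Z.square_nonneg]).
  clearbody t1 t2 D.
  assert (hu : Z.abs t1 = Z.abs t2) by (apply (abs_eq_aux _ _ (D*x1^2) (D*x2^2)); lia).
  clear -hu hsg.
  destruct (Z.abs_spec t1) as [[? E1]|[? E1]]; destruct (Z.abs_spec t2) as [[? E2]|[? E2]];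
    rewrite E1, E2 in hu; lia.
Qed.


Lemma pair_facts (a b c k x1 y1 x2 y2 : Z) : 0 < c -> 0 < 4*a*c - b^2 ->
  qf a b c x1 y1 = k -> qf a b c x2 y2 = k ->
  2*c*y1+b*x1 = 2*c*y2+b*x2 ->
  (x1 = x2 -> y1 = y2) /\ ((x1,y1) <> (x2,y2) -> x2 = - x1).
Proof.
  intros hc hD h1 h2 ht.
  assert (hy : x1 = x2 -> y1 = y2).
  { intros ->. assert (2*c*y1 = 2*c*y2) by lia. apply (Z.mul_reg_l _ _ (2*c)); lia. }
  split; [exact hy|].
  intros hne.
  pose proof (t_sq a b c x1 y1) as e1. rewrite h1, ht in e1.
  pose proof (t_sq a b c x2 y2) as e2. rewrite h2 in e2.
  assert (hx : (4*a*c-b^2) * (x1^2) = (4*a*c-b^2) * (x2^2)) by lia.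
  apply Z.mul_reg_l in hx; [|lia].
  assert ((x1 - x2) * (x1 + x2) = 0) by (rewrite <- Z.sub_0_r; ring_simplify; lia).
  apply Z.mul_eq_0 in H as [H|H].
  - exfalso; apply hne. assert (x1 = x2) by lia. subst. rewrite (hy eq_refl). reflexivity.
  - lia.
Qed.

Lemma count2 (l : list (Z*Z)) : NoDup l ->
  (forall p q, In p l -> In q l -> p <> q -> fst q = - fst p) ->
  (forall p q, In p l -> In q l -> fst p = fst q -> p = q) -> (length l <= 2)%nat.
Proof.
  intros hnd H1 H2.
  destruct l as [|p [|q [|r l']]]; simpl; try lia.
  exfalso.
  inversion hnd as [|? ? hp hnd2]; subst. inversion hnd2 as [|? ? hq _]; subst.
  assert (pq : p <> q) by (intro; subst; apply hp; simpl; auto).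
  assert (pr : p <> r) by (intro; subst; apply hp; simpl; auto).
  assert (qr : q <> r) by (intro; subst; apply hq; simpl; auto).
  assert (E1 := H1 p q ltac:(simpl; auto) ltac:(simpl; auto) pq).
  assert (E2 := H1 p r ltac:(simpl; auto) ltac:(simpl; auto) pr).
  apply qr, H2; simpl; auto. lia.
Qed.

Lemma zero_case (a b c k x y : Z) : 0 < a -> 0 < 4*a*c - b^2 -> k <= 0 ->
  qf a b c x y = k -> (x, y) = (0, 0).
Proof.
  intros ha hD hk hq.
  assert (e : 4*a*qf a b c x y = (2*a*x+b*y)^2 + (4*a*c-b^2)*y^2) by (unfold qf; ring).
  rewrite hq in e.
  assert (0 <= (2*a*x+b*y)^2) by (rewrite Z.pow_2_r; apply Z.square_nonneg).
  assert (0 <= y^2) by (rewrite Z.pow_2_r; apply Z.square_nonneg).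
  assert (0 <= (4*a*c-b^2)*y^2) by (apply Z.mul_nonneg_nonneg; lia).
  assert (4*a*k <= 0) by lia.
  assert (hy2 : (4*a*c-b^2)*y^2 = 0) by lia.
  apply Z.mul_eq_0 in hy2 as [?|hy2]; [lia|].
  apply Z.pow_eq_0 in hy2; [|lia]. subst y.
  assert (hx : (2*a*x)^2 = 0) by lia.
  apply Z.pow_eq_0 in hx; [|lia]. assert (x = 0) by (apply Z.mul_eq_0 in hx as [?|?]; lia). subst; reflexivity.
Qed.

Theorem lemma1 (a b c k : Z) (ha : (0 < a)%Z) (hd : (qdisc a b c < 0)%Z)
  (l : list (Z * Z)) :
  NoDup l ->
  (forall p : Z * Z, In p l ->
     (qf a b c (fst p) (snd p) = k)%Z /\
     (Rabs (IZR (fst p)) <= sqrt (sqrt (IZR (Z.abs k))) / sqrt (IZR (- qdisc a b c)%Z))%R) ->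
  (length l <= 4)%nat.
Proof.
  intros hnd hl.
  assert (hD : - qdisc a b c = 4*a*c - b^2) by (unfold qdisc; ring).
  assert (hD0 : 0 < 4*a*c - b^2) by lia.
  assert (hc : 0 < c).
  { destruct (Z.le_gt_cases c 0) as [hc|hc]; [|exact hc].
    assert (a * c <= 0) by (apply Z.mul_nonneg_nonpos; lia).
    assert (0 <= b^2) by (rewrite Z.pow_2_r; apply Z.square_nonneg). lia. }
  assert (hsol : forall p, In p l -> qf a b c (fst p) (snd p) = k /\
             (4*a*c-b^2)^2 * (fst p)^4 <= Z.abs k).
  { intros p hp. destruct (hl p hp) as [h1 h2]. split; [exact h1|].
    rewrite <- hD. apply real_bound; [lia|lia|exact h2]. }
  destruct (Z.le_gt_cases k 0) as [hk|hk].
  - transitivity (length ((0,0)::nil)); [|simpl; lia].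
    apply NoDup_incl_length; [exact hnd|].
    intros [x y] hp. destruct (hsol _ hp) as [h1 _]. simpl in h1.
    rewrite (zero_case a b c k x y ha hD0 hk h1). simpl; auto.
  - rewrite Z.abs_eq in hsol by lia.
    set (f := fun p : Z*Z => (0 <? tt b c p)).
    rewrite <- (filter_length f l).
    assert (gen : forall (g : Z*Z -> bool),
      (forall p q, In p l -> In q l -> g p = true -> g q = true ->
          0 < tt b c p * tt b c q) ->
      (length (filter g l) <= 2)%nat).
    { intros g hg. apply count2.
      - apply NoDup_filter; exact hnd.
      - intros [x1 y1] [x2 y2] hp hq hne. apply filter_In in hp as [hp gp].
        apply filter_In in hq as [hq gq].
        destruct (hsol _ hp) as [s1 b1]. destruct (hsol _ hq) as [s2 b2].
        cbn [fst snd] in *. pose proof (hg _ _ hp hq gp gq) as hpos. unfold tt in hpos; cbn [fst snd] in hpos.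
        pose proof (same_t a b c k x1 y1 x2 y2 hc ltac:(lia) hD0 s1 b1 s2 b2 hpos) as ht.
        apply (pair_facts a b c k x1 y1 x2 y2 hc hD0 s1 s2 ht); exact hne.
      - intros [x1 y1] [x2 y2] hp hq hx. apply filter_In in hp as [hp gp].
        apply filter_In in hq as [hq gq].
        destruct (hsol _ hp) as [s1 b1]. destruct (hsol _ hq) as [s2 b2].
        cbn [fst snd] in *. pose proof (hg _ _ hp hq gp gq) as hpos. unfold tt in hpos; cbn [fst snd] in hpos.
        pose proof (same_t a b c k x1 y1 x2 y2 hc ltac:(lia) hD0 s1 b1 s2 b2 hpos) as ht.
        rewrite (proj1 (pair_facts a b c k x1 y1 x2 y2 hc hD0 s1 s2 ht) hx), hx. reflexivity. }
    assert (nz : forall p, In p l -> tt b c p <> 0).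
    { intros [x y] hp. destruct (hsol _ hp) as [s1 b1]. cbn [fst snd] in s1, b1.
      pose proof (t_big a b c k x y hc ltac:(lia) hD0 s1 b1). unfold tt; cbn [fst snd].
      assert (0 <= (4*a*c-b^2) * x^2) by (apply Z.mul_nonneg_nonneg; [lia|rewrite Z.pow_2_r; apply Z.square_nonneg]).
      lia. }
    assert (A1 := gen f ltac:(intros p q hp hq gp gq; unfold f in gp, gq;
               apply Z.ltb_lt in gp; apply Z.ltb_lt in gq; apply Z.mul_pos_pos; lia)).
    assert (A2 := gen (fun p => negb (f p)) ltac:(intros p q hp hq gp gq; unfold f in gp, gq;
               apply Bool.negb_true_iff, Z.ltb_ge in gp; apply Bool.negb_true_iff, Z.ltb_ge in gq;
               pose proof (nz p hp); pose proof (nz q hq); apply Z.mul_neg_neg; lia)).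
    lia.
Qed.
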